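(* Let $N\ge 1$. (a) Let $D^1_N,\ldots,D^N_N\in\mathbb{R}^{3^N}$ be the semi-lexicographic perturbation columns defined in the context. Then the $N\times N$ matrix $M_N$ with $(i,j)$ entry $(D^i_N)^\top D^j_N$ satisfies $M_N = 2\times 3^N\, I_N$, where $I_N$ is the $N\times N$ identity matrix. (b) Let $D^1_N,\ldots,D^N_N\in\mathbb{R}^N$ be the columns of an $N\times N$ permutation matrix. Then the $N\times N$ matrix $M_N$ with $(i,j)$ entry $(D^i_N)^\top D^j_N$ satisfies $M_N = I_N$.
   Context: Semi-lexicographic perturbation columns: set $D^1_1 = (-1,-1,2)^\top\in\mathbb{R}^3$. Given $D^1_k,\ldots,D^k_k\in\mathbb{R}^{3^k}$, define $D^1_{k+1},\ldots,D^{k+1}_{k+1}\in\mathbb{R}^{3^{k+1}}$ by: $D^1_{k+1}$ has its first $2\times 3^k$ entries equal to $-1$ and its remaining $3^k$ entries equal to $2$; and for $i=2,\ldots,k+1$, $D^i_{k+1}$ is the vertical concatenation $(D^{i-1}_k; D^{i-1}_k; D^{i-1}_k)$ of three copies of $D^{i-1}_k$. Applying this recursion $N-1$ times gives $D^1_N,\ldots,D^N_N$. A permutation matrix is a matrix whose rows are the rows of the identity matrix in some order. *)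

(* Defs.v *)
From mathcomp Require Import all_boot all_order all_algebra.
Set Implicit Arguments. Unset Strict Implicit. Unset Printing Implicit Defensive.
Import GRing.Theory Num.Theory.
Local Open Scope ring_scope.

(* Semi-lexicographic perturbation columns.
   [slex_entry N i j] is the j-th entry (0-based) of D^{i+1}_N (i 0-based).
   Level N = 1 is the base case D^1_1 = (-1,-1,2); level N+1 (N >= 1) follows
   the recursion of the paper:
     D^1_{N+1} : first 2*3^N entries -1, remaining 3^N entries 2;
     D^{i+1}_{N+1} (i >= 1) = (D^i_N; D^i_N; D^i_N), whose j-th entry is
       the (j mod 3^N)-th entry of D^i_N.
   Level 0 and out-of-range indices are dummy (never used). *)
Fixpoint slex_entry (R : numDomainType) (N i j : nat) {struct N} : R :=
  match N with
  | 0 => 0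
  | 1 => if i == 0%N then (if (j < 2)%N then -1 else 2) else 0
  | (M.+1) as N' =>
      match i with
      | 0 => if (j < 2 * 3 ^ M)%N then -1 else 2
      | i'.+1 => slex_entry R M i' (j %% 3 ^ M)
      end
  end.

Definition slex_col (R : numDomainType) (N : nat) (i : 'I_N) : 'cV[R]_(3 ^ N) :=
  \col_(j < 3 ^ N) slex_entry R N i j.

Definition gram (R : numDomainType) (N m : nat) (D : 'I_N -> 'cV[R]_m) : 'M[R]_N :=
  \matrix_(i < N, j < N) ((D i)^T *m D j) ord0 ord0.

(* Main.v *)
Require Import Defs.
From mathcomp Require Import all_boot all_order all_algebra.
Import GRing.Theory Num.Theory.
Local Open Scope ring_scope.
From mathcomp Require Import zify ring fingroup perm.

Lemma shiftS (R : numDomainType) (G : nat -> R) a b :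
  \sum_(a <= j < a + b) G j = \sum_(0 <= j < b) G (j + a)%N.
Proof.
by rewrite -[X in \sum_(X <= _ < _) _]add0n big_addn addKn.
Qed.

Lemma split3 (R : numDomainType) (G : nat -> R) a :
  \sum_(0 <= j < 3 * a) G j =
  \sum_(0 <= j < a) (G j + G (j + a)%N + G (j + 2 * a)%N).
Proof.
have -> : (3 * a = (a + a) + a)%N by lia.
rewrite (@big_cat_nat _ _ _ a) //=; last by lia.
rewrite (@big_cat_nat _ _ _ (a + a) a) /=; [|lia|lia].
rewrite (@shiftS _ G a a) (@shiftS _ G (a + a) a) !big_split /= addrA.
rewrite mul2n -addnn.
by [].
Qed.

Lemma se0 (R : numDomainType) M j :
  slex_entry R M.+2 0 j = if (j < 2 * 3 ^ M.+1)%N then -1 else 2.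
Proof. by []. Qed.
Lemma seS (R : numDomainType) M i j :
  slex_entry R M.+2 i.+1 j = slex_entry R M.+1 i (j %% 3 ^ M.+1).
Proof. by []. Qed.

Lemma slex_dot (R : numDomainType) M i i' : (i < M.+1)%N -> (i' < M.+1)%N ->
  \sum_(0 <= j < 3 ^ M.+1) slex_entry R M.+1 i j * slex_entry R M.+1 i' j
  = if i == i' then (2 * 3 ^ M.+1)%N%:R else 0.
Proof.
elim: M i i' => [|M IH] i i'.
  move=> hi hi'; have -> : i = 0%N by case: i hi => [|[]].
  have -> : i' = 0%N by case: i' hi' => [|[]].
  rewrite expn1 big_ltn // big_ltn // big_ltn // big_geq //=.
  rewrite !mulrNN mul1r addr0 -natrM.
  by rewrite (_ : 1 = 1%:R) // -!natrD.
move=> hi hi'; rewrite [(3 ^ M.+2)%N]expnS split3.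
set a := (3 ^ M.+1)%N.
have m1 : forall j, (j < a)%N -> (j %% a = j)%N by move=> j; apply: modn_small.
have m2 : forall j, (j < a)%N -> ((j + a) %% a = j)%N by move=> j ja; rewrite modnDr modn_small.
have m3 : forall j, (j < a)%N -> ((j + 2 * a) %% a = j)%N by move=> j ja; rewrite addnC modnMDl modn_small.
rewrite -/a in IH; have ea : (3 ^ M.+1 = a)%N by []; clearbody a.
case: i hi => [|i] hi; case: i' hi' => [|i'] hi'.
- rewrite (eq_big_nat _ _ (F2 := fun j => 6%:R)); last first.
    move=> j /andP[_ ja]; rewrite !se0 ea.
    have h1 : (j < 2 * a)%N by lia.
  have h2 : (j + a < 2 * a)%N by lia.
  have h3 : (j + 2 * a < 2 * a)%N = false by lia.
  rewrite h1 h2 h3.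
    by rewrite !mulrNN mul1r -natrM (_ : 1 = 1%:R) // -!natrD.
  by rewrite sumr_const_nat -mulrnA; congr (_ %:R); lia.
- rewrite [X in _ = X]/= big1_seq // => j; rewrite mem_index_iota => /andP[_ ja].
  rewrite !se0 !seS ea m1 // m2 // m3 //.
  have h1 : (j < 2 * a)%N by lia.
  have h2 : (j + a < 2 * a)%N by lia.
  have h3 : (j + 2 * a < 2 * a)%N = false by lia.
  rewrite h1 h2 h3.
  ring.
- rewrite [X in _ = X]/= big1_seq // => j; rewrite mem_index_iota => /andP[_ ja].
  rewrite !se0 !seS ea m1 // m2 // m3 //.
  have h1 : (j < 2 * a)%N by lia.
  have h2 : (j + a < 2 * a)%N by lia.
  have h3 : (j + 2 * a < 2 * a)%N = false by lia.
  rewrite h1 h2 h3.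
  ring.
- rewrite (eq_big_nat _ _ (F2 := fun j => slex_entry R M.+1 i j * slex_entry R M.+1 i' j *+ 3)); last first.
    move=> j /andP[_ ja]; rewrite !seS ea m1 // m2 // m3 //.
    by rewrite mulrS mulr2n addrA.
  rewrite sumrMnl IH // eqSS; case: eqP => _; last by rewrite mul0rn.
  by rewrite -mulrnA; congr (_ %:R); lia.
Qed.

Theorem lemma1 (R : realFieldType) (N : nat) (hN : (1 <= N)%N) :
  gram (@slex_col R N) = (2 * 3 ^ N)%N%:R%:M
  /\ (forall P : 'M[R]_N, is_perm_mx P ->
        gram (fun i : 'I_N => col i P) = 1%:M).
Proof.
split.
  apply/matrixP => i j; rewrite /gram /slex_col !mxE.
  under eq_bigr => k _ do rewrite !mxE.
  case: N hN i j => // M _ i j.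
  rewrite -(big_mkord xpredT (fun k => slex_entry R M.+1 i k * slex_entry R M.+1 j k)).
  rewrite slex_dot //.
  by case: (i =P j) => [->|ne]; rewrite ?eqxx // ifN //; apply/eqP => /val_inj.
move=> P /is_perm_mxP [s ->].
have -> : gram (fun i => col i (perm_mx s)) = (perm_mx s)^T *m perm_mx s :> 'M[R]_N.
  apply/matrixP => i j; rewrite /gram !mxE.
  by apply: eq_bigr => k _; rewrite !mxE.
by rewrite tr_perm_mx -perm_mxM mulVg perm_mx1.
Qed.
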